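(* Let $n\ge1$ be an integer and consider the hypersurface $X_n=\{w^2+x^2+y^2+z^{n+1}=0\}\subset\mathbb{C}^4$ with weights $\zeta=\left(\frac{2n+2}{n+3},\frac{2n+2}{n+3},\frac{2n+2}{n+3},\frac{4}{n+3}\right)$ on $(w,x,y,z)$. Then $a_0(0)=a_1(0)=\frac{(n+3)^3}{8(n+1)^2}$. For the test symmetry $\eta=(0,0,0,1)$ the Futaki invariant is $F=\frac{(3-n)(n+3)^3}{32(n+1)^2}$, and for $\eta=(1,0,0,0)$ it is $F=\frac{n(n+3)^3}{8(n+1)^3}$. Consequently, for $n\ge4$ there is a test symmetry with $F<0$, so $X_n$ is not K-semistable; and for $n=3$, $\eta=(0,0,0,1)$ has $F=0$ while $c_0-b_0^2/a_0=\frac{27}{128}\neq0$, so $X_3$ is not K-stable.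
   Context: Convention: for a weighted homogeneous hypersurface $\{f=0\}\subset\mathbb{C}^{N}$ with variable weights $k_i>0$ and $f$ of weighted degree $d$, and a test symmetry $\eta$ with charges $v_i$ for which the terms of $f$ of lowest $\eta$-weight have $\eta$-weight $0$, the perturbed Hilbert series is $H_\epsilon(t)=(1-t^{d})/\prod_i(1-t^{k_i+\epsilon v_i})$. With $n=N-1$ and $H_\epsilon(e^{-s})=a_0(\epsilon)s^{-n}+a_1(\epsilon)s^{-(n-1)}+O(s^{-(n-2)})$, the Futaki invariant is $F=n\,a_1'(0)-(n-1)a_0'(0)$, and $b_0=-a_0'(0)/n$, $c_0=a_0''(0)/(n(n+1))$, $a_0=a_0(0)$. A ring is K-semistable if $F\ge0$ for every test symmetry, and K-stable if moreover $F=0$ only when the norm $c_0-b_0^2/a_0$ (for non-trivial test configurations) vanishes. *)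

(* Defs.v *)
From HB Require Import structures.
From mathcomp Require Import all_boot all_order all_algebra.
From mathcomp Require Import all_classical all_reals all_analysis.
Set Implicit Arguments. Unset Strict Implicit. Unset Printing Implicit Defensive.
Import Order.TTheory GRing.Theory Num.Theory.
Import numFieldNormedType.Exports.
Local Open Scope classical_set_scope.
Local Open Scope ring_scope.

Section Defs.
Variable R : realType.
Variable N : nat.
(* Ambient space C^(N.+1), coordinates indexed by 'I_N.+1; the hypersurface
   has complex dimension n = N. *)

(* a monomial = exponent vector; a polynomial f is given by the list of its
   monomials with nonzero coefficient *)
Definition monomial := 'I_N.+1 -> nat.

Definition mweight (k : 'I_N.+1 -> R) (m : monomial) : R :=
  \sum_(i < N.+1) (m i)%:R * k i.

Definition whomog (k : 'I_N.+1 -> R) (f : seq monomial) (d : R) : Prop :=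
  f != [::] /\ forall m, m \in f -> mweight k m = d.

Definition test_symmetry (f : seq monomial) (v : 'I_N.+1 -> R) : Prop :=
  (exists2 m, m \in f & mweight v m = 0) /\ (forall m, m \in f -> 0 <= mweight v m).

Definition hilb (k v : 'I_N.+1 -> R) (d eps t : R) : R :=
  (1 - t `^ d) / \prod_(i < N.+1) (1 - t `^ (k i + eps * v i)).

(* coefficients of H_eps(e^{-s}) = a0 s^{-n} + a1 s^{-(n-1)} + O(s^{-(n-2)}), n = N *)
Definition a0 (k v : 'I_N.+1 -> R) (d eps : R) : R :=
  lim (s ^+ N * hilb k v d eps (expR (- s)) @[s --> 0^'+]).

Definition a1 (k v : 'I_N.+1 -> R) (d eps : R) : R :=
  lim (s ^+ N.-1 * (hilb k v d eps (expR (- s)) - a0 k v d eps / s ^+ N)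
       @[s --> 0^'+]).

Definition futaki (k v : 'I_N.+1 -> R) (d : R) : R :=
  N%:R * (derive1 (fun e => a1 k v d e) 0)
  - (N%:R - 1) * (derive1 (fun e => a0 k v d e) 0).

Definition b0 (k v : 'I_N.+1 -> R) (d : R) : R :=
  - (derive1 (fun e => a0 k v d e) 0) / N%:R.

Definition c0 (k v : 'I_N.+1 -> R) (d : R) : R :=
  derive1n 2 (fun e => a0 k v d e) 0 / (N%:R * (N%:R + 1)).

Definition tnorm (k v : 'I_N.+1 -> R) (d : R) : R :=
  c0 k v d - (b0 k v d) ^+ 2 / a0 k v d 0.

Definition Ksemistable (k : 'I_N.+1 -> R) (f : seq monomial) (d : R) : Prop :=
  forall v, test_symmetry f v -> 0 <= futaki k v d.

Definition Kstable (k : 'I_N.+1 -> R) (f : seq monomial) (d : R) : Prop :=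
  Ksemistable k f d /\
  forall v, test_symmetry f v -> futaki k v d = 0 -> tnorm k v d = 0.

End Defs.

(* The example X_n = {w^2 + x^2 + y^2 + z^(n+1) = 0} in C^4, coordinates
   (w,x,y,z) = indices 0,1,2,3. *)
Definition Xmon (n : nat) : seq (monomial 3) :=
  [:: (fun i : 'I_4 => if val i == 0%N then 2%N else 0%N);
      (fun i : 'I_4 => if val i == 1%N then 2%N else 0%N);
      (fun i : 'I_4 => if val i == 2%N then 2%N else 0%N);
      (fun i : 'I_4 => if val i == 3%N then n.+1 else 0%N)].

Definition zeta (R : realType) (n : nat) : 'I_4 -> R :=
  fun i => if val i == 3%N then 4 / (n%:R + 3) else (2 * n%:R + 2) / (n%:R + 3).

Definition eta_z (R : realType) : 'I_4 -> R := fun i => if val i == 3%N then 1 else 0.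
Definition eta_w (R : realType) : 'I_4 -> R := fun i => if val i == 0%N then 1 else 0.

(* Main.v *)
Require Import Defs.
From HB Require Import structures.
From mathcomp Require Import all_boot all_order all_algebra.
From mathcomp Require Import all_classical all_reals all_analysis.
From mathcomp Require Import ring lra.
Import Order.TTheory GRing.Theory Num.Theory.
Import numFieldNormedType.Exports.
Set Implicit Arguments. Unset Strict Implicit.
Local Open Scope classical_set_scope.
Local Open Scope ring_scope.

Section Core.
Variable R : realType.

Lemma der_lin (c x : R) : is_derive x 1 (fun s : R => - s * c) (- c).
Proof.
have H := @is_deriveM R R -%R (cst c) x 1 (-1) 0 (is_deriveNid _ _) (is_derive_cst _ _ _).
rewrite (_ : (fun s : R => - s * c) = (-%R * cst c)); last by apply/funext => s.
apply: (is_derive_eq H).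
by rewrite /cst /GRing.scale /= mulr0 add0r mulrN1.
Qed.

Lemma der_E (c x : R) : is_derive x 1 (fun s : R => 1 - expR (- s * c)) (c * expR (- x * c)).
Proof.
have H := @is_derive1_comp R expR (fun s : R => - s * c) x (expR (- x * c)) (- c) (is_derive_expR _) (der_lin c x).
have H2 := @is_deriveB R R R (cst 1) (expR \o (fun s : R => - s * c)) x 1 0 _ (is_derive_cst _ _ _) H.
rewrite (_ : (fun s : R => 1 - expR (- s * c)) = (cst 1 - expR \o (fun s : R => - s * c))); last by apply/funext => s.
apply: (is_derive_eq H2).
by rewrite sub0r mulrN opprK mulrC.
Qed.

Lemma der_expc (c x : R) : is_derive x 1 (fun s : R => expR (- s * c)) (- c * expR (- x * c)).
Proof.
have H := @is_derive1_comp R expR (fun s : R => - s * c) x (expR (- x * c)) (- c) (is_derive_expR _) (der_lin c x).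
by apply: (is_derive_eq H); rewrite mulrC.
Qed.

Lemma dcont (f : R -> R) (x df : R) : is_derive x 1 f df -> f y @[y --> x] --> f x.
Proof.
move=> H; apply: differentiable_continuous; apply/derivable1_diffP; exact: ex_derive.
Qed.

Lemma dcont_r (f : R -> R) (x df : R) : is_derive x 1 f df -> f y @[y --> x^'+] --> f x.
Proof. by move=> H; apply: cvg_at_right_filter; exact: dcont H. Qed.

Arguments dcont {f x df}.
Arguments dcont_r {f x df}.

Definition U (c s : R) : R := (1 - expR (- s * c)) / s.

Lemma U_lim (c : R) : U c s @[s --> 0^'+] --> c.
Proof.
have fa0 : (fun s : R => 1 - expR (- s * c)) x @[x --> 0^'+] --> 0.
  have := dcont_r (der_E c 0).
  by rewrite oppr0 mul0r expR0 subrr.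
have ga0 : (fun s : R => s) x @[x --> (0:R)^'+] --> 0.
  by apply: cvg_at_right_filter; exact: cvg_id.
have dlim : (fun s => c * expR (- s * c)) x / (fun s : R => 1) x @[x --> 0^'+] --> c.
  have := dcont_r (der_expc c 0).
  rewrite oppr0 mul0r expR0 => H.
  have H2 : (fun x => c * expR (- x * c)) x @[x --> (0:R)^'+] --> c.
    rewrite -[X in _ --> X]mulr1; apply: cvgM; [exact: cvg_cst | exact: H].
  have E : (fun x : R => c * expR (- x * c) / 1) =1 (fun x => c * expR (- x * c)) by move=> y; rewrite divr1.
  by rewrite (eq_cvg _ _ E).
have gd : forall x : R, x \in `]0, 1[ -> is_derive x 1 (fun s : R => s) 1.
  by move=> x _; exact: is_derive_id.
exact: (@lhopital_at_right R (fun s => 1 - expR (- s * c)) (fun s => c * expR (- s * c))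
   (fun s => s) (fun=> 1) 0 1 c ltr01 (fun x _ => der_E c x) gd fa0 ga0
   (fun x _ => oner_neq0 _) dlim).
Unshelve. all: by end_near.
Qed.

Lemma der_F (c x : R) : is_derive x 1 (fun s : R => (1 - expR (- s * c)) + (- s * c)) (c * expR (- x * c) - c).
Proof.
have H := @is_deriveD R R R (fun s : R => 1 - expR (- s * c)) (fun s : R => - s * c) x 1 _ _ (der_E c x) (der_lin c x).
rewrite (_ : (fun s : R => (1 - expR (- s * c)) + (- s * c)) = ((fun s : R => 1 - expR (- s * c)) + (fun s : R => - s * c))); last by apply/funext => s.
exact: H.
Qed.

Lemma der_sq (x : R) : is_derive x 1 (fun s : R => s * s) (x + x).
Proof.
have H := @is_deriveM R R id id x 1 1 1 (is_derive_id _ _) (is_derive_id _ _).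
rewrite (_ : (fun s : R => s * s) = (id * id)); last by apply/funext => s.
apply: (is_derive_eq H).
by rewrite /GRing.scale /= !mulr1.
Qed.

Lemma U2_lim (c : R) : (U c s - c) / s @[s --> 0^'+] --> - (c * c) / 2.
Proof.
have fa0 : (fun s : R => (1 - expR (- s * c)) + (- s * c)) x @[x --> 0^'+] --> 0.
  have := dcont_r (der_F c 0).
  by rewrite oppr0 !mul0r expR0 subrr addr0.
have ga0 : (fun s : R => s * s) x @[x --> (0:R)^'+] --> 0.
  have := dcont_r (der_sq 0).
  by rewrite mulr0.
have dlim : (fun s => c * expR (- s * c) - c) x / (fun s : R => s + s) x @[x --> 0^'+] --> - (c * c) / 2.
  have H2 : (fun x => - (c / 2) * U c x) x @[x --> (0:R)^'+] --> - (c / 2) * c.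
    apply: cvgM; [exact: cvg_cst | exact: U_lim].
  rewrite (_ : - (c * c) / 2 = - (c / 2) * c); last by ring.
  apply: cvg_trans H2; apply: near_eq_cvg; near=> y.
  have y0 : 0 < y by near: y; exact: nbhs_right_gt.
  rewrite /U; set e := expR _; rewrite -mulr2n; field.
  by rewrite gt_eqF.
have gd : forall x : R, x \in `]0, 1[ -> is_derive x 1 (fun s : R => s * s) (x + x).
  by move=> x _; exact: der_sq.
have dg0 : forall x : R, x \in `]0, 1[ -> x + x != 0.
  move=> x; rewrite in_itv /= => /andP[x0 _]; apply: lt0r_neq0; exact: addr_gt0.
have L := (@lhopital_at_right R (fun s => (1 - expR (- s * c)) + (- s * c)) (fun s => c * expR (- s * c) - c)
   (fun s => s * s) (fun s => s + s) 0 1 _ ltr01 (fun x _ => der_F c x) gd fa0 ga0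
   dg0 dlim).
apply: cvg_trans L; apply: near_eq_cvg; near=> y.
have y0 : 0 < y by near: y; exact: nbhs_right_gt.
rewrite /U; set e := expR _; field.
by rewrite gt_eqF.
Unshelve. all: by end_near.
Qed.

Lemma prodU n (K : 'I_n -> R) :
 (\prod_(i < n) U (K i) s @[s --> 0^'+] --> \prod_(i < n) K i) /\
 ((\prod_(i < n) U (K i) s - \prod_(i < n) K i) / s @[s --> 0^'+] -->
    - (\prod_(i < n) K i) * (\sum_(i < n) K i) / 2).
Proof.
elim: n K => [|n IH] K.
  rewrite !big_ord0.
  split.
    have E0 : (fun s : R => \prod_(i < 0) U (K i) s) =1 (fun=> 1) by move=> s; rewrite big_ord0.
    rewrite (eq_cvg _ _ E0); exact: cvg_cst.
  have E : (fun s : R => (\prod_(i < 0) U (K i) s - 1) / s) =1 (fun=> 0).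
    by move=> s; rewrite big_ord0 subrr mul0r.
  rewrite (eq_cvg _ _ E) (_ : - 1 * 0 / 2 = 0); last by rewrite mulr0 mul0r.
  exact: cvg_cst.
have [IH1 IH2] := IH (fun i => K (widen_ord (leqnSn n) i)).
set A := fun s => \prod_(i < n) U (K (widen_ord (leqnSn n) i)) s in IH1 IH2.
set a := \prod_(i < n) K (widen_ord (leqnSn n) i) in IH1 IH2.
set Sa := \sum_(i < n) K (widen_ord (leqnSn n) i) in IH2.
have E1 : (fun s : R => \prod_(i < n.+1) U (K i) s) =1 (fun s => A s * U (K ord_max) s).
  by move=> s; rewrite big_ord_recr.
have E2 : (fun s : R => (\prod_(i < n.+1) U (K i) s - \prod_(i < n.+1) K i) / s) =1
   (fun s => ((A s - a) / s) * U (K ord_max) s + a * ((U (K ord_max) s - K ord_max) / s)).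
  by move=> s; rewrite big_ord_recr [\prod_(i < n.+1) K i]big_ord_recr /= -/a /A; ring.
rewrite (eq_cvg _ _ E1) (eq_cvg _ _ E2) big_ord_recr big_ord_recr /= -/a -/Sa.
split.
  by apply: cvgM; [exact: IH1 | exact: U_lim].
rewrite (_ : - (a * K ord_max) * (Sa + K ord_max) / 2 =
   (- a * Sa / 2) * K ord_max + a * (- (K ord_max * K ord_max) / 2)); last by ring.
apply: cvgD; apply: cvgM.
- exact: IH2.
- exact: U_lim.
- exact: cvg_cst.
- exact: U2_lim.
Qed.

Lemma powE (s x : R) : expR (- s) `^ x = expR (- s * x).
Proof. by rewrite expRM. Qed.

Lemma UE (s x : R) : s != 0 -> 1 - expR (- s) `^ x = s * U x s.
Proof. by move=> s0; rewrite powE /U mulrCA mulfV // mulr1. Qed.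

Lemma hilbE N (k v : 'I_N.+1 -> R) (d eps s : R) : s != 0 ->
  s ^+ N * hilb k v d eps (expR (- s)) =
  U d s / \prod_(i < N.+1) U (k i + eps * v i) s.
Proof.
move=> s0; rewrite /hilb UE //.
rewrite (eq_bigr (fun i => s * U (k i + eps * v i) s)); last by move=> i _; rewrite UE.
rewrite big_split /= prodr_const card_ord exprS.
set P := \prod_(i < N.+1) _.
have sN : s ^+ N != 0 by rewrite expf_neq0.
rewrite !invfM; set Q := P^-1; set X := U d s.
field.
by rewrite s0 sN.
Qed.

Lemma hilb0 N (k v : 'I_N.+1 -> R) (d eps s : R) :
  \prod_(i < N.+1) (k i + eps * v i) = 0 -> hilb k v d eps (expR (- s)) = 0.
Proof.
move=> /eqP; rewrite prodf_seq_eq0 => /hasP [i _ /= /eqP Ki].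
rewrite /hilb (bigD1 i) //= Ki powRr0 subrr mul0r invr0 mulr0 //.
Qed.

Definition A0 N (k v : 'I_N.+1 -> R) (d eps : R) : R :=
  d / \prod_(i < N.+1) (k i + eps * v i).
Definition A1 N (k v : 'I_N.+1 -> R) (d eps : R) : R :=
  A0 k v d eps * (\sum_(i < N.+1) (k i + eps * v i) - d) / 2.

Lemma a0E N (k v : 'I_N.+1 -> R) (d eps : R) : a0 k v d eps = A0 k v d eps.
Proof.
rewrite /a0 /A0.
set P := \prod_(i < N.+1) _.
have [P0|P0] := eqVneq P 0.
  rewrite P0 invr0 mulr0.
  have E : (fun s : R => s ^+ N * hilb k v d eps (expR (- s))) =1 (fun=> 0).
    by move=> s; rewrite hilb0 // mulr0.
  by rewrite (eq_fun E) lim_cst.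
apply: cvg_lim; first exact: Rhausdorff.
have [L1 _] := prodU (fun i => k i + eps * v i).
have L : (fun s => U d s / \prod_(i < N.+1) U (k i + eps * v i) s) x @[x --> (0:R)^'+] --> d / P.
  apply: cvgM; first exact: U_lim.
  apply: cvgV; [exact: P0 | exact: L1].
apply: cvg_trans L; apply: near_eq_cvg; near=> s.
have s0 : 0 < s by near: s; exact: nbhs_right_gt.
by rewrite hilbE ?gt_eqF.
Unshelve. all: by end_near.
Qed.

Lemma a1E M (k v : 'I_M.+2 -> R) (d eps : R) : a1 k v d eps = A1 k v d eps.
Proof.
rewrite /a1 /A1 a0E /A0.
set P := \prod_(i < M.+2) _.
set S := \sum_(i < M.+2) _.
have [P0|P0] := eqVneq P 0.
  rewrite P0 invr0 mulr0 !mul0r.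
  have E : (fun s : R => s ^+ M.+1.-1 * (hilb k v d eps (expR (- s)) - 0 / s ^+ M.+1)) =1 (fun=> 0).
    by move=> s; rewrite hilb0 // mul0r subrr mulr0.
  by rewrite (eq_fun E) lim_cst.
apply: cvg_lim; first exact: Rhausdorff.
have [L1 L2] := prodU (fun i => k i + eps * v i).
rewrite -/P -/S in L1 L2.
set PU := fun s => \prod_(i < M.+2) U (k i + eps * v i) s.
have L : (fun s => ((U d s - d) / s - (d / P) * ((PU s - P) / s)) / PU s) x @[x --> (0:R)^'+] -->
   ((- (d * d) / 2) - (d / P) * (- P * S / 2)) / P.
  apply: cvgM; last by apply: cvgV; [exact: P0 | exact: L1].
  apply: cvgB; first exact: U2_lim.
  apply: cvgM; [exact: cvg_cst | exact: L2].
rewrite (_ : d / P * (S - d) / 2 = ((- (d * d) / 2) - (d / P) * (- P * S / 2)) / P); last first.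
  by field.
apply: cvg_trans L; apply: near_eq_cvg; near=> s.
have s0 : 0 < s by near: s; exact: nbhs_right_gt.
have Ps : PU s != 0 by near: s; exact: (cvgr_neq0 P L1 P0).
have H := hilbE k v d eps (lt0r_neq0 s0).
have sM : s ^+ M.+1 != 0 by rewrite expf_neq0 // gt_eqF.
have -> : hilb k v d eps (expR (- s)) = U d s / PU s / s ^+ M.+1.
  by apply: (mulfI sM); rewrite H mulrCA mulfV // mulr1.
rewrite /= exprS; set X := U d s; set Q := PU s; set t := s ^+ M.
have t0 : t != 0 by rewrite expf_neq0 // gt_eqF.
field.
by rewrite Ps P0 t0 gt_eqF.
Unshelve. all: by end_near.
Qed.

Lemma derive1_near (f g : R -> R) (x : R) :
  (\forall y \near x, f y = g y) -> derive1 f x = derive1 g x.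
Proof.
move=> fg.
have fgx : f x = g x := nbhs_singleton fg.
have N0 : \forall h \near (0:R), f (h + x) = g (h + x).
  move: fg; rewrite (near_shift 0 x) /= => fg.
  by near=> h; rewrite -[x in h + x]subr0; near: h.
have N : \forall h \near (0:R)^', h^-1 *: (f (h + x) - f x) = h^-1 *: (g (h + x) - g x).
  near=> h; rewrite fgx; congr (_ *: (_ - _)); near: h.
  exact: (nbhs_dnbhs N0).
rewrite /derive1.
have E : (fun h => h^-1 *: (f (h + x) - f x)) @ (0:R)^' = (fun h => h^-1 *: (g (h + x) - g x)) @ (0:R)^'.
  apply/seteqP; split; apply: near_eq_cvg => //.
  by near=> h; symmetry; near: h; exact: N.
by rewrite E.
Unshelve. all: by end_near.
Qed.

Lemma derive1_val (f : R -> R) (x df : R) : is_derive x 1 f df -> derive1 f x = df.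
Proof. by move=> H; rewrite derive1E; exact: derive_val. Qed.

Lemma der_shift (c x : R) : is_derive x 1 (fun e : R => c + e) 1.
Proof.
have H := @is_deriveD R R R (cst c) id x 1 0 1 (is_derive_cst _ _ _) (is_derive_id _ _).
rewrite (_ : (fun e : R => c + e) = (cst c + id)); last by apply/funext.
by apply: (is_derive_eq H); rewrite add0r.
Qed.

Lemma der_inv (D c x : R) : c + x != 0 ->
  is_derive x 1 (fun e : R => D / (c + e)) (- D / (c + x) ^+ 2).
Proof.
move=> cx.
have H1 := @is_deriveV R (fun e : R => c + e) x 1 1 cx (der_shift c x).
have H2 := @is_deriveZ R R R (fun y : R => (c + y)^-1) D x 1 _ H1.
rewrite (_ : (fun e : R => D / (c + e)) = (D *: (fun y : R => (c + y)^-1))); last by apply/funext.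
apply: (is_derive_eq H2).
by rewrite /GRing.scale /= mulr1 mulrN mulNr.
Qed.

Lemma derive1_inv (D c x : R) : c + x != 0 ->
  derive1 (fun e : R => D / (c + e)) x = - D / (c + x) ^+ 2.
Proof. by move=> cx; rewrite derive1E; have := der_inv D cx => H; exact: derive_val. Qed.

Lemma near_ne0 (c : R) : c != 0 -> \forall e \near (0:R), c + e != 0.
Proof.
move=> c0.
have H := dcont (der_shift c 0).
rewrite addr0 in H.
exact: (cvgr_neq0 c H c0).
Qed.

Lemma derive1_A0 (D c : R) : c != 0 ->
  derive1 (fun e : R => D / (c + e)) 0 = - D / c ^+ 2.
Proof. by move=> c0; rewrite derive1_inv ?addr0. Qed.

Lemma derive1_A1 (D c L : R) : c != 0 ->
  derive1 (fun e : R => D / (c + e) * (L + e) / 2) 0 = D * (c - L) / (2 * c ^+ 2).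
Proof.
move=> c0.
rewrite (@derive1_near _ (fun e => D / 2 + (D * (L - c) / 2) / (c + e))); last first.
  have := near_ne0 c0; apply: filter_app; near=> e => ce.
  by field.
have H := @is_deriveD R R R (cst (D / 2)) (fun e : R => (D * (L - c) / 2) / (c + e)) 0 1 0 _
   (is_derive_cst _ _ _) (@der_inv (D * (L - c) / 2) c 0 ltac:(by rewrite addr0)).
rewrite derive1E.
rewrite (_ : (fun e : R => D / 2 + (D * (L - c) / 2) / (c + e)) =
   (cst (D / 2) + (fun e : R => (D * (L - c) / 2) / (c + e)))); last by apply/funext.
rewrite (@derive_val _ _ _ _ _ _ _ H) addr0.
by field.
Unshelve. all: by end_near.
Qed.

Lemma derive2_A0 (D c : R) : c != 0 ->
  derive1n 2 (fun e : R => D / (c + e)) 0 = 2 * D / c ^+ 3.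
Proof.
move=> c0.
rewrite /derive1n /=.
rewrite (@derive1_near _ (fun e => (- D) * ((fun y : R => 1 / (c + y)) ^+ 2) e)); last first.
  have := near_ne0 c0; apply: filter_app; near=> e => ce.
  rewrite derive1_inv //.
  change (- D / (c + e) ^+ 2 = - D * ((1 / (c + e)) ^+ 2)).
  by field.
have H1 := @is_deriveX R R (fun y : R => 1 / (c + y)) 2 0 1 _ (@der_inv 1 c 0 ltac:(by rewrite addr0)).
have H2 := @is_deriveZ R R R _ (- D) 0 1 _ H1.
rewrite (_ : (fun e : R => (- D) * ((fun y : R => 1 / (c + y)) ^+ 2) e) =
   ((- D) *: ((fun y : R => 1 / (c + y)) ^+ 2))); last by apply/funext.
rewrite (derive1_val H2) /GRing.scale /= addr0.
by field.
Unshelve. all: by end_near.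
Qed.
End Core.

Section Conc.
Variables (R : realType) (n : nat).
Let nr : R := n%:R.
Let z0 : R := (2 * nr + 2) / (nr + 3).
Let z3 : R := 4 / (nr + 3).

Lemma dval (d : R) (hd : whomog (zeta R n) (Xmon n) d) : d = 2 * z0.
Proof.
have := hd.2 _ (mem_head _ _).
rewrite /mweight !big_ord_recl big_ord0 /= /zeta /=.
by rewrite !mul0r !addr0 => <-.
Qed.

Lemma A0z (d e : R) : A0 (zeta R n) (eta_z R) d e = (d / (z0 * z0 * z0)) / (z3 + e).
Proof.
rewrite /A0 !big_ord_recl big_ord0 /= /zeta /eta_z /= -/nr -/z0 -/z3.
rewrite !mulr0 !addr0 mulr1 mulr1 invfM mulrA [z3 + e]addrC.
by rewrite !invfM !mulrA.
Qed.

Lemma A1z (d e : R) : A1 (zeta R n) (eta_z R) d e =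
  (d / (z0 * z0 * z0)) / (z3 + e) * ((3 * z0 + z3 - d) + e) / 2.
Proof.
rewrite /A1 A0z !big_ord_recl big_ord0 /= /zeta /eta_z /= -/nr -/z0 -/z3.
congr (_ * _ / _); ring.
Qed.

Lemma A0w (d e : R) : A0 (zeta R n) (eta_w R) d e = (d / (z0 * z0 * z3)) / (z0 + e).
Proof.
rewrite /A0 !big_ord_recl big_ord0 /= /zeta /eta_w /= -/nr -/z0 -/z3.
rewrite !mulr0 !addr0 !mulr1 !invfM; ring.
Qed.

Lemma A1w (d e : R) : A1 (zeta R n) (eta_w R) d e =
  (d / (z0 * z0 * z3)) / (z0 + e) * ((3 * z0 + z3 - d) + e) / 2.
Proof.
rewrite /A1 A0w !big_ord_recl big_ord0 /= /zeta /eta_w /= -/nr -/z0 -/z3.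
congr (_ * _ / _); ring.
Qed.

Lemma A00 (d : R) : A0 (zeta R n) (fun=> 0) d 0 = d / (z0 * z0 * z0 * z3).
Proof.
rewrite /A0 !big_ord_recl big_ord0 /= /zeta /= -/nr -/z0 -/z3.
rewrite !mulr0 !addr0 !mulr1 !invfM; ring.
Qed.

Lemma A10 (d : R) : A1 (zeta R n) (fun=> 0) d 0 = d / (z0 * z0 * z0 * z3) * (3 * z0 + z3 - d) / 2.
Proof.
rewrite /A1 A00 !big_ord_recl big_ord0 /= /zeta /= -/nr -/z0 -/z3.
congr (_ * _ / _); ring.
Qed.

Lemma nr_ge0 : 0 <= nr. Proof. exact: ler0n. Qed.
Lemma nr3 : nr + 3 != 0. Proof. apply/eqP => H; have := nr_ge0; lra. Qed.
Lemma nr1 : nr + 1 != 0. Proof. apply/eqP => H; have := nr_ge0; lra. Qed.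
Lemma z0_neq0 : z0 != 0.
Proof. rewrite /z0 mulf_neq0 ?invr_eq0 ?nr3 //; apply/eqP => H; have := nr_ge0; lra. Qed.
Lemma z3_neq0 : z3 != 0.
Proof. by rewrite /z3 mulf_neq0 ?invr_eq0 ?nr3. Qed.

Lemma fut_z (d : R) (hd : whomog (zeta R n) (Xmon n) d) :
  futaki (zeta R n) (eta_z R) d = (3 - nr) * (nr + 3) ^+ 3 / (32 * (nr + 1) ^+ 2).
Proof.
rewrite /futaki.
have E0 : (fun e => a0 (zeta R n) (eta_z R) d e) = (fun e => (d / (z0 * z0 * z0)) / (z3 + e)).
  by apply/funext => e; rewrite a0E A0z.
have E1 : (fun e => a1 (zeta R n) (eta_z R) d e) =
   (fun e => (d / (z0 * z0 * z0)) / (z3 + e) * ((3 * z0 + z3 - d) + e) / 2).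
  by apply/funext => e; rewrite a1E A1z.
rewrite E0 E1 derive1_A0 ?z3_neq0 // derive1_A1 ?z3_neq0 //.
rewrite (dval hd) /z3 /z0.
have h3 := nr3; have h1 := nr1.
field.
by apply/and3P; split; apply/eqP => H; have := ler0n R n; lra.
Qed.

Ltac sidec := repeat (apply/andP; split); apply/eqP => H; have := ler0n R n; lra.

Lemma fut_w (d : R) (hd : whomog (zeta R n) (Xmon n) d) :
  futaki (zeta R n) (eta_w R) d = nr * (nr + 3) ^+ 3 / (8 * (nr + 1) ^+ 3).
Proof.
rewrite /futaki.
have E0 : (fun e => a0 (zeta R n) (eta_w R) d e) = (fun e => (d / (z0 * z0 * z3)) / (z0 + e)).
  by apply/funext => e; rewrite a0E A0w.
have E1 : (fun e => a1 (zeta R n) (eta_w R) d e) =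
   (fun e => (d / (z0 * z0 * z3)) / (z0 + e) * ((3 * z0 + z3 - d) + e) / 2).
  by apply/funext => e; rewrite a1E A1w.
rewrite E0 E1 derive1_A0 ?z0_neq0 // derive1_A1 ?z0_neq0 //.
rewrite (dval hd) /z3 /z0.
field.
sidec.
Qed.

Lemma a00v (d : R) (hd : whomog (zeta R n) (Xmon n) d) :
  a0 (zeta R n) (fun=> 0) d 0 = (nr + 3) ^+ 3 / (8 * (nr + 1) ^+ 2).
Proof.
rewrite a0E A00 (dval hd) /z3 /z0.
field.
sidec.
Qed.

Lemma a10v (d : R) (hd : whomog (zeta R n) (Xmon n) d) :
  a1 (zeta R n) (fun=> 0) d 0 = (nr + 3) ^+ 3 / (8 * (nr + 1) ^+ 2).
Proof.
rewrite a1E A10 (dval hd) /z3 /z0.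
field.
sidec.
Qed.

Lemma tnorm_z (d : R) (hd : whomog (zeta R n) (Xmon n) d) :
  tnorm (zeta R n) (eta_z R) d = (nr + 3) ^+ 5 / (2304 * (nr + 1) ^+ 2).
Proof.
rewrite /tnorm /c0 /b0.
have E0 : (fun e => a0 (zeta R n) (eta_z R) d e) = (fun e => (d / (z0 * z0 * z0)) / (z3 + e)).
  by apply/funext => e; rewrite a0E A0z.
rewrite E0 derive1_A0 ?z3_neq0 // derive2_A0 ?z3_neq0 // a0E A0z.
rewrite (dval hd) /z3 /z0.
field.
sidec.
Qed.
End Conc.

Lemma ts_z (R : realType) (n : nat) : test_symmetry (Xmon n) (eta_z R).
Proof.
split.
  exists (fun i : 'I_4 => if val i == 0%N then 2%N else 0%N); first exact: mem_head.
  rewrite /mweight !big_ord_recl big_ord0 /= /eta_z /=. ring.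
move=> m _; apply: sumr_ge0 => i _; apply: mulr_ge0 => //.
by rewrite /eta_z; case: ifP.
Qed.

Lemma ts_w (R : realType) (n : nat) : test_symmetry (Xmon n) (eta_w R).
Proof.
split.
  exists (fun i : 'I_4 => if val i == 1%N then 2%N else 0%N).
    by rewrite /Xmon !inE eqxx orbT.
  rewrite /mweight !big_ord_recl big_ord0 /= /eta_w /=; ring.
move=> m _; apply: sumr_ge0 => i _; apply: mulr_ge0 => //.
by rewrite /eta_w; case: ifP.
Qed.

Unset Implicit Arguments.
Theorem mainTheorem3 (R : realType) (n : nat) (hn : (1 <= n)%N) (d : R)
    (hd : whomog (zeta R n) (Xmon n) d) :
  let nr : R := n%:R in
  a0 (zeta R n) (fun=> 0) d 0 = (nr + 3) ^+ 3 / (8 * (nr + 1) ^+ 2) /\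
  a1 (zeta R n) (fun=> 0) d 0 = (nr + 3) ^+ 3 / (8 * (nr + 1) ^+ 2) /\
  test_symmetry (Xmon n) (eta_z R) /\
  futaki (zeta R n) (eta_z R) d = (3 - nr) * (nr + 3) ^+ 3 / (32 * (nr + 1) ^+ 2) /\
  test_symmetry (Xmon n) (eta_w R) /\
  futaki (zeta R n) (eta_w R) d = nr * (nr + 3) ^+ 3 / (8 * (nr + 1) ^+ 3) /\
  ((4 <= n)%N ->
     (exists v, test_symmetry (Xmon n) v /\ futaki (zeta R n) v d < 0) /\
     ~ Ksemistable (zeta R n) (Xmon n) d) /\
  (n = 3%N ->
     futaki (zeta R n) (eta_z R) d = 0 /\
     tnorm (zeta R n) (eta_z R) d = 27 / 128 /\
     ~ Kstable (zeta R n) (Xmon n) d).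
Proof.
move=> nr.
have Fz := fut_z hd.
have Fneg : (4 <= n)%N -> futaki (zeta R n) (eta_z R) d < 0.
  move=> n4; rewrite Fz.
  have n4' : 4 <= nr by rewrite /nr (ler_nat R 4 n).
  have pos : 0 < (nr + 3) ^+ 3 / (32 * (nr + 1) ^+ 2).
    apply: divr_gt0; first by apply: exprn_gt0; lra.
    apply: mulr_gt0; first lra.
    by apply: exprn_gt0; lra.
  rewrite -mulrA pmulr_llt0 //; lra.
split; first exact: a00v.
split; first exact: a10v.
split; first exact: ts_z.
split; first exact: Fz.
split; first exact: ts_w.
split; first exact: fut_w.
split.
  move=> n4; split; first by exists (eta_z R); split; [exact: ts_z | exact: Fneg].
  move=> Hs; have := Hs _ (ts_z R n); have := Fneg n4; lra.
move=> n3.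
have F0 : futaki (zeta R n) (eta_z R) d = 0.
  by rewrite Fz /nr n3 subrr !mul0r.
have T : tnorm (zeta R n) (eta_z R) d = 27 / 128.
  rewrite tnorm_z // n3.
  by field.
split; first exact: F0.
split; first exact: T.
move=> [_ Hs]; have := Hs _ (ts_z R n) F0; rewrite T => H.
have : (27 / 128 : R) != 0 by rewrite mulf_neq0 // invr_eq0.
by rewrite H eqxx.
Qed.
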